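(* Let $X$ be a finite-dimensional real Hilbert space, let $C$ be a nonempty closed convex subset of $X$, and let $x\in X$. Then there exists a face $F$ of $C$ such that \[ P_C x = P_{\operatorname{aff} F}\, x . \]
   Context: For a nonempty closed convex set $S\subseteq X$, $P_S$ denotes the orthogonal (nearest-point) projector onto $S$. A subset $F$ of a convex set $C$ is a face of $C$ if whenever $x,y\in C$ and the open segment $]x,y[$ meets $F$, then $x,y\in F$ (in particular $C$ is a face of itself). $\operatorname{aff} F$ denotes the affine hull of $F$, i.e. the smallest affine subspace containing $F$ (which is closed since $X$ is finite-dimensional). *)

(* Defs.v *)
From HB Require Import structures.
From mathcomp Require Import all_boot all_order all_algebra.
From mathcomp Require Import all_classical all_reals topology normedtype.
Import numFieldNormedType.Exports.
Set Implicit Arguments. Unset Strict Implicit. Unset Printing Implicit Defensive.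
Import Order.TTheory GRing.Theory Num.Theory.
Local Open Scope ring_scope.
Local Open Scope classical_set_scope.

(* The finite-dimensional real Hilbert space X is modelled as 'rV[R]_n
   with the standard Euclidean inner product. *)
Definition dotv (R : realType) (n : nat) (u v : 'rV[R]_n) : R :=
  (u *m v^T) 0 0.

Definition sqdist (R : realType) (n : nat) (u v : 'rV[R]_n) : R :=
  dotv (u - v) (u - v).

Definition convex_set (R : realType) (n : nat) (C : set 'rV[R]_n) : Prop :=
  forall x y t, C x -> C y -> 0 <= t <= 1 -> C ((1 - t) *: x + t *: y).

Definition open_segment (R : realType) (n : nat) (x y : 'rV[R]_n) : set 'rV[R]_n :=
  [set z | exists2 t : R, 0 < t < 1 & z = (1 - t) *: x + t *: y].

Definition is_face (R : realType) (n : nat) (C F : set 'rV[R]_n) : Prop :=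
  F `<=` C /\
  forall x y, C x -> C y -> open_segment x y `&` F !=set0 -> F x /\ F y.

Definition affine_set (R : realType) (n : nat) (A : set 'rV[R]_n) : Prop :=
  forall x y (t : R), A x -> A y -> A ((1 - t) *: x + t *: y).

Definition aff (R : realType) (n : nat) (F : set 'rV[R]_n) : set 'rV[R]_n :=
  [set z | forall A, affine_set A -> F `<=` A -> A z].

Definition nearest (R : realType) (n : nat) (S : set 'rV[R]_n) (x p : 'rV[R]_n) : Prop :=
  S p /\ forall y, S y -> sqdist x p <= sqdist x y.

(* orthogonal (nearest-point) projector onto S (meaningful for S nonempty
   closed convex, where the nearest point exists and is unique) *)
Definition nproj (R : realType) (n : nat) (S : set 'rV[R]_n) (x : 'rV[R]_n) : 'rV[R]_n :=
  xget 0 (nearest S x).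

(* Main.v *)
Require Import Defs.
From HB Require Import structures.
From mathcomp Require Import all_boot all_order all_algebra.
From mathcomp Require Import all_classical all_reals topology normedtype.
From mathcomp Require Import derive ring lra.
Import numFieldNormedType.Exports.
Import Order.TTheory GRing.Theory Num.Theory.
Local Open Scope ring_scope.
Local Open Scope classical_set_scope.

Section Aux.
Variables (R : realType) (n : nat).
Implicit Types (u v w a b p x y z : 'rV[R]_n).

Lemma dotvE u v : dotv u v = \sum_j u 0 j * v 0 j.
Proof. by rewrite /dotv !mxE; apply: eq_bigr => j _; rewrite mxE. Qed.

Lemma dotvC u v : dotv u v = dotv v u.
Proof. by rewrite !dotvE; apply: eq_bigr => j _; rewrite mulrC. Qed.

Lemma dotvDl u v w : dotv (u + v) w = dotv u w + dotv v w.
Proof. by rewrite !dotvE -big_split; apply: eq_bigr => j _; rewrite !mxE mulrDl. Qed.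

Lemma dotvZl (t : R) u w : dotv (t *: u) w = t * dotv u w.
Proof. by rewrite !dotvE mulr_sumr; apply: eq_bigr => j _; rewrite !mxE mulrA. Qed.

Lemma dotvNl u w : dotv (- u) w = - dotv u w.
Proof. by rewrite !dotvE -sumrN; apply: eq_bigr => j _; rewrite !mxE mulNr. Qed.

Lemma dotvDr u v w : dotv w (u + v) = dotv w u + dotv w v.
Proof. by rewrite ![dotv w _]dotvC dotvDl. Qed.

Lemma dotvZr (t : R) u w : dotv w (t *: u) = t * dotv w u.
Proof. by rewrite ![dotv w _]dotvC dotvZl. Qed.

Lemma dotvNr u w : dotv w (- u) = - dotv w u.
Proof. by rewrite ![dotv w _]dotvC dotvNl. Qed.

Lemma dotv_ge0 v : 0 <= dotv v v.
Proof. by rewrite dotvE; apply: sumr_ge0 => j _; rewrite -expr2 sqr_ge0. Qed.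

Lemma dotv_eq0 v : dotv v v = 0 -> v = 0.
Proof.
rewrite dotvE => /psumr_eq0P H; apply/rowP => j; rewrite mxE.
have /eqP := H (fun i _ => ltac:(rewrite -expr2; exact: sqr_ge0)) j isT.
rewrite -expr2.
by rewrite sqrf_eq0 => /eqP.
Qed.

Lemma sq_expand u w (t : R) :
  dotv (u - t *: w) (u - t *: w) = dotv u u - 2 * t * dotv u w + t ^+ 2 * dotv w w.
Proof.
rewrite !dotvDl !dotvDr !dotvNl !dotvNr !dotvZr !dotvZl (dotvC w u); ring.
Qed.

Lemma combE a b p (t : R) :
  (1 - t) *: a + t *: b - p = (1 - t) *: (a - p) + t *: (b - p).
Proof. by apply/rowP => j; rewrite !mxE; ring. Qed.

Lemma comb2E x p y (t : R) :
  x - ((1 - t) *: p + t *: y) = (x - p) - t *: (y - p).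
Proof. by apply/rowP => j; rewrite !mxE; ring. Qed.

Lemma dotv_comb u a b p (t : R) :
  dotv u ((1 - t) *: a + t *: b - p) = (1 - t) * dotv u (a - p) + t * dotv u (b - p).
Proof. by rewrite !dotvE !mulr_sumr -big_split /=; apply: eq_bigr => j _; rewrite !mxE; ring. Qed.

Lemma dotv0r u : dotv u 0 = 0.
Proof. by rewrite dotvE big1 // => j _; rewrite mxE mulr0. Qed.

Lemma norm_sq_le v : `|v| ^+ 2 <= dotv v v.
Proof.
suff [h0 h1] : 0 <= `|v| /\ `|v| ^+ 2 <= dotv v v by [].
rewrite [`|v|]mx_normrE; apply: (big_ind (fun m => 0 <= m /\ m ^+ 2 <= dotv v v)).
- by rewrite lexx expr0n /= dotv_ge0.
- move=> a b [a0 a2] [b0 b2]; rewrite maxEle; by case: ifP.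
- move=> [i j] _ /=; rewrite ord1 normr_ge0; split => //.
  rewrite real_normK ?num_real // dotvE (bigD1 j) //= -expr2 lerDl.
  by apply: sumr_ge0 => k _; rewrite -expr2 sqr_ge0.
Qed.

Lemma norm_le_dotv v : `|v| <= 1 + dotv v v.
Proof. have := norm_sq_le v; have := normr_ge0 v; nra. Qed.

Lemma sqdist_cont x : continuous (fun y : 'rV[R]_n => sqdist x y).
Proof.
have -> : (fun y => sqdist x y) =
  (fun y => \sum_(j <- index_enum 'I_n) (x 0 j - y 0 j) * (x 0 j - y 0 j)).
  by apply: funext => y; rewrite /sqdist dotvE; apply: eq_bigr => j _; rewrite !mxE.
elim: (index_enum _) => [|j s IH].
  by under eq_fun do rewrite big_nil; exact: cst_continuous.
under eq_fun do rewrite big_cons.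
move=> y.
have hj : {for y, continuous (fun y0 : 'rV[R]_n => x 0 j - y0 0 j)}.
  apply: (@continuousB _ _ _ (fun=> x 0 j) (fun y0 : 'rV[R]_n => y0 0 j));
    [exact: cst_continuous | exact: coord_continuous].
exact: (continuousD (continuousM hj hj) (IH y)).
Qed.

Lemma nearest_exists (C : set 'rV[R]_n) x :
  C !=set0 -> closed C -> exists p, nearest C x p.
Proof.
case=> c0 Cc0 clC.
pose r := 1 + sqdist x c0.
have r0 : 0 < r by rewrite /r /sqdist; have := dotv_ge0 (x - c0); lra.
pose K := C `&` [set y | `|x - y| <= r].
have clK : closed K.
  apply: closedI => //; have := @closed_ball_closed _ _ x r.
  by rewrite closed_ballE.
have bK : bounded_set K.
  rewrite /= /bounded_near; near=> M => y [_ Hy] /=.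
  have -> : y = x - (x - y) by rewrite opprB addrC subrK.
  apply: (le_trans (ler_normB _ _)); apply: (@le_trans _ _ (`|x| + r)).
    by rewrite lerD2l.
  near: M; exact: nbhs_pinfty_ge (num_real _).
have K0 : K !=set0 by exists c0; split => //=; exact: norm_le_dotv.
have cK := bounded_closed_compact bK clK.
have [c cK' cmin] := EVT_min_rV K0 cK (continuous_subspaceT (sqdist_cont x)).
move: cK'; rewrite inE => -[Cc Kc].
exists c; split => // y Cy.
have [Hy|Hy] := lerP `|x - y| r.
  by apply: cmin; rewrite inE.
have := cmin c0 ltac:(rewrite inE; split => //=; exact: norm_le_dotv).
have := norm_sq_le (x - y); rewrite /sqdist -/(sqdist x c0) -/r.
move: Hy; rewrite /r => Hy h1 h2.
have h3 : 0 <= `|x - y| := normr_ge0 _.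
nra.
Unshelve. all: by end_near.
Qed.

Lemma var_ineq (C : set 'rV[R]_n) x p y :
  convex_set C -> nearest C x p -> C y -> dotv (x - p) (y - p) <= 0.
Proof.
move=> cvx [Cp Hp] Cy.
set d := dotv (x - p) (y - p); set e := dotv (y - p) (y - p).
have e0 : 0 <= e := dotv_ge0 _.
have key : forall t, 0 <= t <= 1 -> 0 <= t * (t * e - 2 * d).
  move=> t t01; have := Hp _ (cvx p y t Cp Cy t01).
  rewrite /sqdist comb2E sq_expand -/d -/e => h; nra.
rewrite leNgt; apply/negP => d0.
pose t := d / (d + e).
have de0 : 0 < d + e by lra.
have ht : t * (d + e) = d by rewrite /t mulrVK // unitfE gt_eqF.
have t0 : 0 < t by rewrite /t divr_gt0.
have t1 : t <= 1 by rewrite /t ler_pdivrMr // mul1r; lra.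
have := key t ltac:(rewrite (ltW t0) t1 //).
nra.
Qed.

Lemma nproj_eq (S : set 'rV[R]_n) x p :
  nearest S x p -> (forall q, nearest S x q -> q = p) -> nproj S x = p.
Proof. by move=> Np U; rewrite /nproj; apply: xget_unique. Qed.
End Aux.

Theorem corollary2p4 (R : realType) (n : nat) (C : set 'rV[R]_n) (x : 'rV[R]_n) :
  C !=set0 -> closed C -> convex_set C ->
  exists F : set 'rV[R]_n,
    is_face C F /\ F !=set0 /\ nproj C x = nproj (aff F) x.
Proof.
move=> C0 clC cvx.
have [p0 Hp0] := @nearest_exists R n C x C0 clC.
set p := nproj C x.
have Np : nearest C x p by rewrite /p /nproj; apply: xgetPex; exists p0.
set u := x - p.
exists [set y | C y /\ dotv u (y - p) = 0].
split; [split|split].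
- by move=> y [].
- move=> a b Ca Cb [z [[t /andP[t0 t1] ->] [_ Hz]]].
  move: Hz; rewrite dotv_comb => Hz.
  have ha := @var_ineq R n C x p _ cvx Np Ca; have hb := @var_ineq R n C x p _ cvx Np Cb.
  rewrite -/u in ha hb.
  split; split => //; nra.
- exists p; split; [exact: Np.1 | by rewrite subrr dotv0r].
have Haff : forall z, aff [set y | C y /\ dotv u (y - p) = 0] z -> dotv u (z - p) = 0.
  move=> z Hz; apply: (Hz [set w | dotv u (w - p) = 0]).
    by move=> a b s Ha Hb /=; rewrite dotv_comb Ha Hb !mulr0 addr0.
  by move=> y [].
have pA : aff [set y | C y /\ dotv u (y - p) = 0] p.
  move=> A _; apply; split; [exact: Np.1 | by rewrite subrr dotv0r].
have pyth : forall z, aff [set y | C y /\ dotv u (y - p) = 0] z ->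
    sqdist x z = sqdist x p + dotv (z - p) (z - p).
  move=> z Az; have := @sq_expand R n u (z - p) 1.
  rewrite scale1r (Haff z Az) /u.
  have -> : x - p - (z - p) = x - z by rewrite opprB addrA subrK.
  by rewrite /sqdist => ->; rewrite mulr0 subr0 expr1n mul1r.
have Nq : nearest (aff [set y | C y /\ dotv u (y - p) = 0]) x p.
  split => // z Az; rewrite (pyth z Az); have := @dotv_ge0 R n (z - p); lra.
symmetry; apply: nproj_eq => // q [Aq Hq].
have := Hq p pA; rewrite pyth // => h.
have : dotv (q - p) (q - p) = 0.
  by apply/eqP; rewrite eq_le dotv_ge0 andbT; lra.
by move/dotv_eq0/eqP; rewrite subr_eq0 => /eqP.
Qed.
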